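(* Let $k$ be a field, $\Gamma=(V,E)$ a finite connected quiver, $I\subseteq R^2$ a two-sided ideal of $k\Gamma$, and $\mathscr{Q}$ a fixed basis of $k\Gamma/I$ as in the context. Then $\mathfrak{B}=\mathfrak{B}_1\cup\mathfrak{B}_2$ is a $k$-basis of the space $\mathrm{Diff}(k\Gamma,k\Gamma/I)$ of differential operators from $k\Gamma$ to $k\Gamma/I$, where $\mathfrak{B}_1=\{D_{\overline{s}}\mid\overline{s}\in\mathscr{Q}_A\}$ and $\mathfrak{B}_2=\{D_{r,\overline{s}}\mid r\in E,\ \overline{s}\in\mathscr{Q},\ r\parallel\overline{s}\}$.
   Context: For a path $p$, $t(p),h(p)$ are its start and end vertex (vertices are trivial paths); paths multiply by left-to-right concatenation (product $0$ if they do not concatenate). $R$ is the ideal generated by $E$, $\overline{x}=x+I$. A differential operator from $k\Gamma$ to $k\Gamma/I$ is a $k$-linear map $D$ with $D(xy)=D(x)\overline{y}+\overline{x}D(y)$. $\mathscr{Q}$ is a fixed $k$-basis of $k\Gamma/I$ consisting of residue classes of paths and containing $\overline{v}$ ($v\in V$) and $\overline{e}$ ($e\in E$); for $\overline{q}\in\mathscr{Q}$, $t(\overline{q}),h(\overline{q})$ are the start/end vertex of any representing path (well defined), and $r\parallel\overline{s}$ means $t(r)=t(\overline{s})$, $h(r)=h(\overline{s})$. $\mathscr{Q}_A=\{\overline{q}\in\mathscr{Q}\mid t(\overline{q})\neq h(\overline{q})\}$. For $m\in k\Gamma/I$, $D_m$ is the inner differential operator $x\mapsto m\overline{x}-\overline{x}m$.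 For $r\in E$ and $\overline{s}\in\mathscr{Q}$ with $r\parallel\overline{s}$, $D_{r,\overline{s}}$ is the unique differential operator $k\Gamma\to k\Gamma/I$ with $D_{r,\overline{s}}(r)=\overline{s}$ and $D_{r,\overline{s}}(x)=0$ for all $x\in (E\setminus\{r\})\cup V$. *)

(* Defs.v *)
From HB Require Import structures.
From mathcomp Require Import all_boot all_order all_algebra.
From mathcomp Require Import finmap monalg.
Set Implicit Arguments. Unset Strict Implicit. Unset Printing Implicit Defensive.
Import GRing.Theory.
Local Open Scope ring_scope.

Section Quiver.
Variables (V E : finType) (src tgt : E -> V).

(* Raw path: (start vertex, list of arrows).  It is a valid path if the
   arrows concatenate (left to right) and the first arrow starts at the
   recorded start vertex. Trivial paths = (v, [::]). *)
Definition is_qpath (x : V * seq E) : bool :=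
  match x.2 with
  | [::] => true
  | e :: s => (src e == x.1) && path (fun a b => tgt a == src b) e s
  end.

Definition qpath := {x : V * seq E | is_qpath x}.

Definition pt (p : qpath) : V := (val p).1.
Definition ph (p : qpath) : V := last (val p).1 (map tgt (val p).2).
Definition plen (p : qpath) : nat := size (val p).2.

Definition vpath (v : V) : qpath := exist _ (v, [::]) isT.

Lemma edge_is_qpath (e : E) : is_qpath (src e, [:: e]).
Proof. by rewrite /is_qpath /= eqxx. Qed.

Definition epath (e : E) : qpath := exist _ (src e, [:: e]) (edge_is_qpath e).

(* left-to-right concatenation; None stands for product 0 *)
Definition pcat (p q : qpath) : option qpath :=
  if ph p == pt q then insub ((val p).1, (val p).2 ++ (val q).2) else None.

Definition qconnected : Prop :=
  (0 < #|V|)%N /\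
  forall u v : V, connect (fun a b => [exists e : E,
     ((src e == a) && (tgt e == b)) || ((src e == b) && (tgt e == a))]) u v.

Variable k : fieldType.

Definition pathalg := {malg k[qpath]}.

Definition pmul (f g : pathalg) : pathalg :=
  \sum_(p <- enum_fset (msupp f)) \sum_(q <- enum_fset (msupp g))
     (f@_p * g@_q) *: (if pcat p q is Some r then << r >> else 0).

Definition pone : pathalg := \sum_(v : V) << vpath v >>.

(* I is contained in R^2, R the ideal generated by the arrows: R^2 is the
   span of the paths of length >= 2 *)
Definition in_R2 (x : pathalg) : Prop := forall p, (plen p < 2)%N -> x@_p = 0.

Definition two_sided_ideal (I : pathalg -> Prop) : Prop :=
  [/\ I 0, (forall x y, I x -> I y -> I (x + y)),
      (forall (a : k) x, I x -> I (a *: x)) &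
      (forall x y, I x -> I (pmul x y) /\ I (pmul y x))].

Variable A : algType k.

(* pi : k Gamma -> A presents A as the quotient algebra k Gamma / I *)
Definition is_quotient_map (I : pathalg -> Prop) (pi : pathalg -> A) : Prop :=
  [/\ (forall (a : k) x y, pi (a *: x + y) = a *: pi x + pi y),
      (forall x y, pi (pmul x y) = pi x * pi y),
      pi pone = 1,
      (forall y, exists x, pi x = y) &
      (forall x, pi x = 0 <-> I x)].

Definition is_diff (pi : pathalg -> A) (D : pathalg -> A) : Prop :=
  (forall (a : k) x y, D (a *: x + y) = a *: D x + D y) /\
  (forall x y, D (pmul x y) = D x * pi y + pi x * D y).

Definition Dinner (pi : pathalg -> A) (m : A) : pathalg -> A :=
  fun x => m * pi x - pi x * m.

(* Qp: set of representing paths of the basis Q = { pi p | p in Qp } *)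
Definition is_path_basis (pi : pathalg -> A) (Qp : pred qpath) : Prop :=
  [/\ {in Qp &, injective (fun p => pi << p >>)},
      (forall v, Qp (vpath v)), (forall e, Qp (epath e)),
      (forall (s : seq qpath) (c : qpath -> k), uniq s -> all Qp s ->
         \sum_(p <- s) c p *: pi << p >> = 0 -> forall p, p \in s -> c p = 0) &
      (forall y : A, exists (s : seq qpath) (c : qpath -> k),
         all Qp s /\ y = \sum_(p <- s) c p *: pi << p >>)].

End Quiver.

Definition is_fun_basis (k : fieldType) (A : lmodType k) (X : Type)
    (Idx : choiceType) (P : pred Idx) (F : Idx -> X -> A) (S : (X -> A) -> Prop)
    : Prop :=
  [/\ (forall i, P i -> S (F i)),
      (forall (s : seq Idx) (c : Idx -> k), uniq s -> all P s ->
         (forall x, \sum_(i <- s) c i *: F i x = 0) ->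
         forall i, i \in s -> c i = 0) &
      (forall D, S D -> exists (s : seq Idx) (c : Idx -> k),
         all P s /\ forall x, D x = \sum_(i <- s) c i *: F i x)].

(* Main.v *)
Require Import Defs.
From HB Require Import structures.
From mathcomp Require Import all_boot all_order all_algebra.
From mathcomp Require Import finmap monalg.
Set Implicit Arguments. Unset Strict Implicit. Unset Printing Implicit Defensive.
Import GRing.Theory.
Local Open Scope ring_scope.

Lemma sum_pmap (I : eqType) (T : Type) (M : zmodType) (f : I -> option T)
  (G : I -> M) (G' : T -> M) (s : seq I) :
  (forall i, i \in s -> match f i with Some t => G i = G' t | None => G i = 0 end) ->
  \sum_(i <- s) G i = \sum_(t <- pmap f s) G' t.
Proof.
elim: s => [|i s IH] H; first by rewrite !big_nil.
rewrite big_cons /=; have := H i (mem_head _ _).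
case: (f i) => [t|] ->; rewrite IH ?big_cons ?add0r // => j Hj;
  apply: H; by rewrite in_cons Hj orbT.
Qed.

Section Span.
Variables (K : fieldType) (M : lmodType K) (X : Type) (Idx : choiceType)
  (P : pred Idx) (F : Idx -> X -> M).

Definition inspan (f : X -> M) := exists l : seq (Idx * K),
  all (fun ia => P ia.1) l /\ forall x, f x = \sum_(ia <- l) ia.2 *: F ia.1 x.

Lemma inspan_ext f g : inspan f -> (forall x, g x = f x) -> inspan g.
Proof. by move=> [l [Hl Hf]] H; exists l; split => // x; rewrite H Hf. Qed.

Lemma inspan0 : inspan (fun _ => 0).
Proof. by exists [::]; split => // x; rewrite big_nil. Qed.

Lemma inspanD f g : inspan f -> inspan g -> inspan (fun x => f x + g x).
Proof.
move=> [l [Hl Hf]] [l' [Hl' Hg]]; exists (l ++ l'); split.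
  by rewrite all_cat Hl Hl'.
by move=> x; rewrite big_cat Hf Hg.
Qed.

Lemma inspan_lin (l : seq (Idx * K)) : all (fun ia => P ia.1) l ->
  inspan (fun x => \sum_(ia <- l) ia.2 *: F ia.1 x).
Proof. by move=> Hl; exists l. Qed.

Lemma sum_regroup (G : Idx -> M) (l : seq (Idx * K)) (s : seq Idx) :
  uniq s -> (forall ia, ia \in l -> ia.1 \in s) ->
  \sum_(ia <- l) ia.2 *: G ia.1 =
  \sum_(i <- s) (\sum_(ia <- l | ia.1 == i) ia.2) *: G i.
Proof.
move=> Hu; elim: l => [|[j a] l IH] Hs.
  by rewrite big_nil big1 // => i _; rewrite big_nil scale0r.
rewrite big_cons IH; last by move=> ia Hia; apply: Hs; rewrite in_cons Hia orbT.
have Hj : j \in s by apply: (Hs (j, a)); rewrite mem_head.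
under [RHS]eq_bigr => i _ do rewrite big_cons /=.
have -> : \sum_(i <- s) (if j == i then a + \sum_(ia <- l | ia.1 == i) ia.2
     else \sum_(ia <- l | ia.1 == i) ia.2) *: G i =
  \sum_(i <- s) ((if j == i then a else 0) *: G i +
     (\sum_(ia <- l | ia.1 == i) ia.2) *: G i).
  by apply: eq_bigr => i _; case: (j == i); rewrite ?scalerDl ?scale0r ?add0r.
rewrite big_split /=; congr (_ + _).
rewrite (bigD1_seq j) //= eqxx big1 ?addr0 // => i /negbTE.
by rewrite eq_sym => ->; rewrite scale0r.
Qed.

Lemma inspan_basis f : inspan f -> exists (s : seq Idx) (c : Idx -> K),
  all P s /\ forall x, f x = \sum_(i <- s) c i *: F i x.
Proof.
move=> [l [Hl Hf]]; exists (undup (map fst l)).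
exists (fun i => \sum_(ia <- l | ia.1 == i) ia.2); split.
  by rewrite all_undup all_map.
move=> x; rewrite Hf (@sum_regroup (fun i => F i x) l (undup (map fst l))) ?undup_uniq //.
by move=> ia Hia; rewrite mem_undup; apply: map_f.
Qed.
End Span.

Section Paths.
Variables (k : fieldType) (V E : finType) (src tgt : E -> V).
Local Notation PA := (pathalg src tgt k).
Local Notation QP := (qpath src tgt).

Lemma mon_sig : {f : QP -> PA | forall p, f p = << p >>}.
Proof. by exists (fun p => << p >>). Qed.
Definition mon : QP -> PA := proj1_sig mon_sig.
Lemma monE (p : QP) : mon p = << p >>.
Proof. exact: (proj2_sig mon_sig p). Qed.

Lemma msuppU1' (p : QP) : msupp (mon p) = [fset p]%fset.
Proof. have h := (msuppU p (1:k)). rewrite oner_eq0 in h. rewrite monE; exact h. Qed.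

Lemma mcoeffUU1 (p : QP) : (mon p)@_p = 1.
Proof. rewrite monE; exact: mcoeffUU. Qed.

Lemma pmul_eq (f g : PA) (sf sg : {fset QP}) : msupp f = sf -> msupp g = sg ->
  pmul f g = \sum_(p <- sf) \sum_(q <- sg)
     (f@_p * g@_q) *: (if pcat p q is Some r then mon r else 0).
Proof.
move=> <- <-; rewrite /pmul; apply: eq_bigr => p' _; apply: eq_bigr => q' _.
case: pcat => [r|]; last by []. congr (_ *: _). by rewrite monE.
Qed.

Lemma pmulUU (p q : QP) :
  pmul (mon p) (mon q) = if pcat p q is Some r then mon r else 0.
Proof.
rewrite (pmul_eq (msuppU1' p) (msuppU1' q)).
rewrite !big_seq_fset1.
rewrite !mcoeffUU1 mulr1 scale1r.
by [].
Qed.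

Lemma pcat_vl (u : V) (p : QP) :
  pcat (vpath src tgt u) p = if pt p == u then Some p else None.
Proof.
rewrite /pcat /ph /= eq_sym; case: eqP => // <-.
by rewrite /pt -surjective_pairing valK.
Qed.

Lemma pcat_vr (p : QP) (w : V) :
  pcat p (vpath src tgt w) = if ph p == w then Some p else None.
Proof.
rewrite /pcat /pt /=; case: eqP => // _.
by rewrite cats0 -surjective_pairing valK.
Qed.

Lemma pcat_e (e : E) (v : V) (l : seq E) (H : is_qpath src tgt (v, e :: l))
  (H' : is_qpath src tgt (tgt e, l)) :
  pcat (epath src tgt e) (exist _ (tgt e, l) H') = Some (exist _ (v, e :: l) H).
Proof.
rewrite /pcat /ph /pt /= eqxx.
have Hv : src e = v.
  by have := H; rewrite /is_qpath /= => /andP [/eqP].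
rewrite Hv; exact: (valK (exist _ (v, e :: l) H)).
Qed.

Lemma malgUZ (c : k) (p : QP) : (<< c *g p >> : PA) = c *: mon p.
Proof.
apply/malgP => q.
apply: (etrans (mcoeffU p c q)); apply: esym.
apply: (etrans (mcoeffZ c _ q)). rewrite monE.
apply: (etrans (congr1 (fun z => c * z) (mcoeffU p 1 q))).
by case: (p == q); rewrite /= ?mulr1 ?mulr0.
Qed.

Lemma qpath_tail (v : V) (e : E) (l : seq E) :
  is_qpath src tgt (v, e :: l) -> is_qpath src tgt (tgt e, l).
Proof.
rewrite /is_qpath /= => /andP [_]; case: l => //= f l /andP [H1 H2].
by rewrite eq_sym H1 H2.
Qed.

Lemma pathU_cons (v : V) (e : E) (l : seq E) (H : is_qpath src tgt (v, e :: l)) :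
  mon (exist _ (v, e :: l) H) =
  pmul (mon (epath src tgt e)) (mon (exist _ (tgt e, l) (qpath_tail H))).
Proof. by rewrite pmulUU (pcat_e H). Qed.

Variable (A : algType k).

Section Lin.
Variable (f : PA -> A).
Hypothesis HL : forall (a : k) x y, f (a *: x + y) = a *: f x + f y.

Lemma lin0 : f 0 = 0.
Proof.
have := HL 1 0 0; rewrite scale1r addr0 scale1r => h.
by apply: (addrI (f 0)); rewrite addr0 -h.
Qed.

Lemma linD x y : f (x + y) = f x + f y.
Proof. by have := HL 1 x y; rewrite !scale1r. Qed.

Lemma linZ a x : f (a *: x) = a *: f x.
Proof. by have := HL a x 0; rewrite !addr0 lin0 addr0. Qed.

Lemma linB x y : f (x - y) = f x - f y.
Proof.
have := HL (-1) y x; rewrite addrC scaleN1r => ->.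
by rewrite scaleN1r addrC.
Qed.

Lemma lin_sum (I : Type) (s : seq I) (F : I -> PA) :
  f (\sum_(i <- s) F i) = \sum_(i <- s) f (F i).
Proof.
elim: s => [|i s IH]; first by rewrite !big_nil lin0.
by rewrite !big_cons linD IH.
Qed.

Lemma lin_ext : (forall p, f (mon p) = 0) -> forall x, f x = 0.
Proof.
move=> h x; rewrite (monalgE x) lin_sum big1 // => p _.
by rewrite malgUZ linZ h scaler0.
Qed.
End Lin.

Variable (pi : PA -> A).

Lemma diff_zero (D : PA -> A) : is_diff pi D ->
  (forall v, D (mon (vpath src tgt v)) = 0) ->
  (forall e, D (mon (epath src tgt e)) = 0) -> forall x, D x = 0.
Proof.
move=> [HL HM] Hv He; apply: (lin_ext HL).
case=> [[v l] H]; elim: l v H => [|e l IH] v H.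
  have -> : exist _ (v, [::]) H = vpath src tgt v by apply: val_inj.
  exact: Hv.
by rewrite (pathU_cons H) HM He IH mul0r mulr0 addr0.
Qed.

End Paths.

Section Main.
Variables (k : fieldType) (V E : finType) (src tgt : E -> V) (A : algType k).
Local Notation PA := (pathalg src tgt k).
Local Notation QP := (qpath src tgt).
Local Notation mon := (@mon k V E src tgt).
Variables (pi : PA -> A) (Qp : pred QP) (Drs : E -> QP -> PA -> A).
Hypothesis HpiL : forall (a : k) x y, pi (a *: x + y) = a *: pi x + pi y.
Hypothesis HpiM : forall x y, pi (pmul x y) = pi x * pi y.
Hypothesis Hpi1 : pi (pone src tgt k) = 1.
Hypothesis HBind : forall (s : seq QP) (c : QP -> k), uniq s -> all Qp s ->
  \sum_(p <- s) c p *: pi (mon p) = 0 -> forall p, p \in s -> c p = 0.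
Hypothesis HBspan : forall y : A, exists (s : seq QP) (c : QP -> k),
  all Qp s /\ y = \sum_(p <- s) c p *: pi (mon p).
Hypothesis HD : forall r s, Qp s -> src r = pt s -> tgt r = ph s ->
  [/\ is_diff pi (Drs r s), Drs r s (mon (epath src tgt r)) = pi (mon s),
      (forall e, e != r -> Drs r s (mon (epath src tgt e)) = 0) &
      (forall v, Drs r s (mon (vpath src tgt v)) = 0)].

Local Notation ev v := (pi (mon (vpath src tgt v))).
Local Notation Idx := (QP + (E * QP))%type.

Definition Pidx (i : Idx) : bool :=
  match i with
  | inl s => Qp s && (pt s != ph s)
  | inr (r, s) => [&& Qp s, src r == pt s & tgt r == ph s]
  end.
Definition Fidx (i : Idx) : PA -> A :=
  match i with
  | inl s => Dinner pi (pi (mon s))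
  | inr (r, s) => Drs r s
  end.

Lemma HDrs' r p : Pidx (inr (r, p)) ->
  [/\ is_diff pi (Drs r p), Drs r p (mon (epath src tgt r)) = pi (mon p),
      (forall e, e != r -> Drs r p (mon (epath src tgt e)) = 0) &
      (forall v, Drs r p (mon (vpath src tgt v)) = 0)].
Proof. by case/and3P => Hq /eqP h1 /eqP h2; apply: HD. Qed.

Lemma pi0 : pi 0 = 0.
Proof. exact: (lin0 HpiL). Qed.

Lemma pi_vl u p : ev u * pi (mon p) = (pt p == u)%:R *: pi (mon p).
Proof.
rewrite -HpiM pmulUU pcat_vl; case: (pt p == u).
  by rewrite scale1r.
by rewrite pi0 scale0r.
Qed.

Lemma pi_vr p w : pi (mon p) * ev w = (ph p == w)%:R *: pi (mon p).
Proof.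
rewrite -HpiM pmulUU pcat_vr; case: (ph p == w).
  by rewrite scale1r.
by rewrite pi0 scale0r.
Qed.

Lemma e_mul u v : ev u * ev v = (u == v)%:R *: ev u.
Proof. by rewrite pi_vr. Qed.

Lemma e_sum : \sum_v ev v = 1.
Proof.
rewrite -Hpi1 /pone -(lin_sum HpiL (index_enum V) (fun v => mon (vpath src tgt v))).
congr pi; apply: eq_bigr => v _; exact: monE.
Qed.

Lemma Dinner_diff m : is_diff pi (Dinner pi m).
Proof.
split.
  move=> a x y; rewrite /Dinner HpiL mulrDr mulrDl -scalerAr -scalerAl scalerBr opprD.
  by rewrite addrACA.
move=> x y; rewrite /Dinner HpiM mulrBl mulrBr !mulrA.
by rewrite addrA subrK.
Qed.

Lemma Dinner_sum (I : Type) (s : seq I) (Q : pred I) (c : I -> k) (mm : I -> A) x :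
  Dinner pi (\sum_(i <- s | Q i) c i *: mm i) x =
  \sum_(i <- s | Q i) c i *: Dinner pi (mm i) x.
Proof.
rewrite /Dinner mulr_suml mulr_sumr -sumrB; apply: eq_bigr => i _.
by rewrite -scalerAl -scalerAr scalerBr.
Qed.

Lemma Dinner_v q v : Dinner pi (pi (mon q)) (mon (vpath src tgt v)) =
  ((ph q == v)%:R - (pt q == v)%:R) *: pi (mon q).
Proof. by rewrite /Dinner pi_vr pi_vl scalerBl. Qed.

Lemma diff_ext D1 D2 : is_diff pi D1 -> (forall x, D2 x = D1 x) -> is_diff pi D2.
Proof. by move=> [L M] H; split => *; rewrite !H ?L ?M. Qed.

Lemma diff_add D1 D2 : is_diff pi D1 -> is_diff pi D2 ->
  is_diff pi (fun x => D1 x + D2 x).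
Proof.
move=> [L1 M1] [L2 M2]; split => [a x y|x y].
  by rewrite L1 L2 scalerDr addrACA.
by rewrite M1 M2 mulrDl mulrDr addrACA.
Qed.

Lemma diff_opp D1 : is_diff pi D1 -> is_diff pi (fun x => - D1 x).
Proof.
move=> [L1 M1]; split => [a x y|x y].
  by rewrite L1 opprD scalerN.
by rewrite M1 opprD mulNr mulrN.
Qed.

Lemma diff_scale c D1 : is_diff pi D1 -> is_diff pi (fun x => c *: D1 x).
Proof.
move=> [L1 M1]; split => [a x y|x y].
  by rewrite L1 scalerDr !scalerA mulrC.
by rewrite M1 scalerDr scalerAl scalerAr.
Qed.

Lemma diff_0 : is_diff pi (fun _ => 0).
Proof. split => [a x y|x y]; first by rewrite scaler0 addr0. by rewrite mulr0 mul0r addr0. Qed.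

Lemma diff_sum (I : eqType) (s : seq I) (Q : pred I) (Dp : I -> PA -> A) :
  (forall i, i \in s -> Q i -> is_diff pi (Dp i)) ->
  is_diff pi (fun x => \sum_(i <- s | Q i) Dp i x).
Proof.
elim: s => [|i s IH] H.
  by apply: (diff_ext diff_0) => x; rewrite big_nil.
have IH' : is_diff pi (fun x => \sum_(i <- s | Q i) Dp i x).
  by apply: IH => j Hj; apply: H; rewrite in_cons Hj orbT.
case HQ: (Q i).
  apply: (diff_ext (diff_add (H i (mem_head _ _) HQ) IH')) => x.
  by rewrite big_cons HQ.
by apply: (diff_ext IH') => x; rewrite big_cons HQ.
Qed.

Definition getl (i : Idx) : option QP := if i is inl q then Some q else None.
Definition getr (r : E) (i : Idx) : option QP :=
  if i is inr (r', p) then (if r' == r then Some p else None) else None.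

Lemma getlK : ocancel getl inl.
Proof. by case. Qed.

Lemma getrK r : ocancel (getr r) (fun p => inr (r, p)).
Proof. by case=> [q|[r' p]] //=; case: eqP => // ->. Qed.

Lemma indep (s : seq Idx) (c : Idx -> k) : uniq s -> all Pidx s ->
  (forall x, \sum_(i <- s) c i *: Fidx i x = 0) -> forall i, i \in s -> c i = 0.
Proof.
move=> Hu HP H0.
have Hl : forall q, inl q \in s -> c (inl q) = 0.
  move=> q Hq.
  have /andP [HQq Hpt] : Pidx (inl q) := allP HP _ Hq.
  have := H0 (mon (vpath src tgt (ph q))).
  rewrite (@sum_pmap _ _ _ getl _ (fun q' => (c (inl q') *
     ((ph q' == ph q)%:R - (pt q' == ph q)%:R)) *: pi (mon q'))).
    move/HBind => /(_ (pmap_uniq getlK Hu)) H1.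
    have Hall : all Qp (pmap getl s).
      apply/allP => p; rewrite mem_pmap => /mapP [[q'|[r p']] Hi //= [->]].
      by have /andP [] := allP HP _ Hi.
    have Hmem : q \in pmap getl s.
      by rewrite mem_pmap; apply/mapP; exists (inl q).
    have := H1 Hall q Hmem.
    by rewrite eqxx (negbTE Hpt) subr0 mulr1.
  case=> [q'|[r p]] Hi /=.
    by rewrite Dinner_v scalerA.
  have [_ _ _ ->] := HDrs' (allP HP _ Hi).
  by rewrite scaler0.
move=> [q|[r p]] Hi; first exact: Hl.
have := H0 (mon (epath src tgt r)).
rewrite (@sum_pmap _ _ _ (getr r) _ (fun p' => c (inr (r, p')) *: pi (mon p'))).
  move/HBind => /(_ (pmap_uniq (getrK r) Hu)) H1.
  have Hall : all Qp (pmap (getr r) s).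
    apply/allP => p'; rewrite mem_pmap => /mapP [[q'|[r' p'']] Hi' //=].
    case: eqP => // _ [->].
    by have /and3P [] := allP HP _ Hi'.
  by apply: (H1 Hall); rewrite mem_pmap; apply/mapP; exists (inr (r, p)) => //=; rewrite eqxx.
case=> [q|[r' p']] Hi' /=.
  by rewrite Hl // scale0r.
have [_ H1 H2 _] := HDrs' (allP HP _ Hi').
case: (eqVneq r' r) => [Heq|Hne].
  by subst r'; rewrite H1.
by rewrite H2 ?scaler0 // eq_sym.
Qed.


Lemma span_arrows (L : seq E) : forall D1, is_diff pi D1 ->
  (forall v, D1 (mon (vpath src tgt v)) = 0) ->
  (forall e, e \notin L -> D1 (mon (epath src tgt e)) = 0) ->
  inspan Pidx Fidx D1.
Proof.
elim: L => [|r L IH] D1 HD1 Hv He.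
  apply: (inspan_ext (inspan0 Pidx Fidx)) => x.
  exact: (diff_zero HD1 Hv (fun e => He e isT)).
have [HL HM] := HD1.
have h1 : pmul (mon (vpath src tgt (src r))) (mon (epath src tgt r)) =
          mon (epath src tgt r).
  by rewrite pmulUU pcat_vl /pt /= eqxx.
have h2 : pmul (mon (epath src tgt r)) (mon (vpath src tgt (tgt r))) =
          mon (epath src tgt r).
  by rewrite pmulUU pcat_vr /ph /= eqxx.
have hl : D1 (mon (epath src tgt r)) = ev (src r) * D1 (mon (epath src tgt r)).
  by rewrite -{1}h1 HM Hv mul0r add0r.
have hr : D1 (mon (epath src tgt r)) = D1 (mon (epath src tgt r)) * ev (tgt r).
  by rewrite -{1}h2 HM Hv mulr0 addr0.
have [s1 [c1 [Hs1 Hexp]]] := HBspan (D1 (mon (epath src tgt r))).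
pose par := fun p : QP => (pt p == src r) && (ph p == tgt r).
have Hr : D1 (mon (epath src tgt r)) = \sum_(p <- s1 | par p) c1 p *: pi (mon p).
  rewrite hl hr Hexp mulr_suml mulr_sumr [RHS]big_mkcond; apply: eq_bigr => p _.
  rewrite -scalerAl pi_vr -!scalerAr pi_vl !scalerA /par.
  by case: (pt p == src r); case: (ph p == tgt r);
    rewrite /= ?mulr1 ?mulr0 ?scale0r ?scale1r.
have HparP : forall p, p \in s1 -> par p -> Pidx (inr (r, p)).
  move=> p Hp /andP [/eqP h3 /eqP h4].
  by rewrite /= (allP Hs1 _ Hp) h3 h4 !eqxx.
pose G x := \sum_(p <- s1 | par p) c1 p *: Drs r p x.
have HG : inspan Pidx Fidx G.
  apply: (inspan_ext (@inspan_lin _ _ _ _ Pidx Fidx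
     [seq (inr (r, p), c1 p) | p <- s1 & par p] _)).
    apply/allP => ia /mapP [p]; rewrite mem_filter => /andP [Hpar Hp] ->.
    exact: HparP.
  by move=> x; rewrite /G big_map big_filter.
have HGd : is_diff pi G.
  apply: diff_sum => p Hp Hpar.
  have [Hd _ _ _] := HDrs' (HparP p Hp Hpar).
  exact: diff_scale.
pose D3 x := D1 x - G x.
have HD3 : is_diff pi D3 := diff_add HD1 (diff_opp HGd).
have Hv3 : forall v, D3 (mon (vpath src tgt v)) = 0.
  move=> v; rewrite /D3 Hv /G big1_seq ?subr0 // => p /andP [Hpar Hp].
  have [_ _ _ ->] := HDrs' (HparP p Hp Hpar).
  by rewrite scaler0.
have He3 : forall e, e \notin L -> D3 (mon (epath src tgt e)) = 0.
  move=> e HeL; case: (eqVneq e r) => [->|Hne].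
    have HGr : G (mon (epath src tgt r)) =
        \sum_(p <- s1 | par p) c1 p *: pi (mon p).
      rewrite /G [LHS]big_seq_cond [RHS]big_seq_cond; apply: eq_bigr => p /andP [Hp Hpar].
      by have [_ -> _ _] := HDrs' (HparP p Hp Hpar).
    by rewrite /D3 Hr HGr subrr.
  rewrite /D3 He; last by rewrite in_cons negb_or Hne HeL.
  rewrite /G big1_seq ?subr0 // => p /andP [Hpar Hp].
  have [_ _ H3 _] := HDrs' (HparP p Hp Hpar).
  by rewrite (H3 e Hne) scaler0.
apply: (inspan_ext (inspanD (IH D3 HD3 Hv3 He3) HG)) => x.
by rewrite /D3 subrK.
Qed.

Lemma span_all D : is_diff pi D -> inspan Pidx Fidx D.
Proof.
move=> HDd; have [HL HM] := HDd.
pose m := \sum_(u : V) D (mon (vpath src tgt u)) * ev u.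
have Hvv : forall v, D (mon (vpath src tgt v)) =
    D (mon (vpath src tgt v)) * ev v + ev v * D (mon (vpath src tgt v)).
  by move=> v; rewrite -HM pmulUU pcat_vl /pt /= eqxx.
have Huv : forall u v, u != v ->
    D (mon (vpath src tgt u)) * ev v + ev u * D (mon (vpath src tgt v)) = 0.
  move=> u v Huv; rewrite -HM pmulUU pcat_vl /pt /= eq_sym (negbTE Huv).
  exact: (lin0 HL).
have F1 : forall v, ev v * ev v = ev v.
  by move=> v; rewrite e_mul eqxx scale1r.
have F2 : forall u v, u != v -> ev u * ev v = 0.
  by move=> u v h; rewrite e_mul (negbTE h) scale0r.
have F3 : forall v, ev v * D (mon (vpath src tgt v)) * ev v = 0.
  move=> v.
  have h2 : ev v * D (mon (vpath src tgt v)) * ev v =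
    ev v * D (mon (vpath src tgt v)) * ev v + ev v * D (mon (vpath src tgt v)) * ev v.
    by rewrite {1}(Hvv v) mulrDr mulrDl !mulrA F1 -!mulrA F1.
  apply: (@addrI _ (ev v * D (mon (vpath src tgt v)) * ev v)).
  by rewrite addr0 -h2.
have F4 : forall u v, u != v ->
    ev v * D (mon (vpath src tgt u)) = - (D (mon (vpath src tgt v)) * ev u).
  move=> u v h; apply: (@addrI _ (D (mon (vpath src tgt v)) * ev u)).
  by rewrite Huv ?subrr // eq_sym.
have Hm : forall v, D (mon (vpath src tgt v)) = Dinner pi m (mon (vpath src tgt v)).
  move=> v.
  have S1 : \sum_(u | u != v) D (mon (vpath src tgt u)) * ev u * ev v = 0.
    by apply: big1 => u h; rewrite -mulrA F2 ?mulr0.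
  have S2 : \sum_(u | u != v) ev v * (D (mon (vpath src tgt u)) * ev u) =
      - (D (mon (vpath src tgt v)) * \sum_(u | u != v) ev u).
    rewrite mulr_sumr -sumrN; apply: eq_bigr => u h.
    by rewrite mulrA F4 // mulNr -mulrA F1.
  have Hsum : \sum_(u | u != v) ev u = 1 - ev v.
    have := e_sum; rewrite (bigD1 v) //= => h.
    by rewrite -h addrC addrK.
  rewrite /Dinner /m (bigD1 v) //= mulrDl mulrDr mulr_suml mulr_sumr S1 S2 Hsum.
  rewrite -mulrA F1 mulrA F3 mulrBr mulr1 addr0 add0r opprK.
  by rewrite subrKC.
have [s0 [c0 [Hs0 Hm0]]] := HBspan m.
pose mA := \sum_(p <- s0 | pt p != ph p) c0 p *: pi (mon p).
pose D1 x := D x - Dinner pi mA x.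
have HD1 : is_diff pi D1 := diff_add HDd (diff_opp (Dinner_diff mA)).
have Hv1 : forall v, D1 (mon (vpath src tgt v)) = 0.
  move=> v; rewrite /D1 Hm Hm0 /mA !Dinner_sum.
  apply/eqP; rewrite subr_eq0; apply/eqP.
  rewrite (bigID (fun p => pt p != ph p)) /= [X in _ + X = _]big1 ?addr0 // => p.
  rewrite negbK => /eqP h.
  by rewrite Dinner_v h subrr scale0r scaler0.
have HD1s : inspan Pidx Fidx D1.
  apply: (span_arrows (L := enum E) HD1 Hv1) => e.
  by rewrite mem_enum.
have HmA : inspan Pidx Fidx (Dinner pi mA).
  apply: (inspan_ext (@inspan_lin _ _ _ _ Pidx Fidx
     [seq (inl p, c0 p) | p <- s0 & pt p != ph p] _)).
    apply/allP => ia /mapP [p]; rewrite mem_filter => /andP [Hp Hin] ->.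
    by rewrite /= (allP Hs0 _ Hin) Hp.
  by move=> x; rewrite /mA Dinner_sum big_map big_filter.
apply: (inspan_ext (inspanD HmA HD1s)) => x.
by rewrite /D1 subrKC.
Qed.

Lemma main_basis : is_fun_basis Pidx Fidx (is_diff pi).
Proof.
split.
- case=> [s /andP [Hq _]|[r s] Hi]; first exact: Dinner_diff.
  by have [] := HDrs' Hi.
- exact: indep.
- by move=> D HDd; apply: inspan_basis; apply: span_all.
Qed.

End Main.

Lemma is_fun_basis_ext (K : fieldType) (M : lmodType K) (X : Type) (Idx : choiceType)
  (P : pred Idx) (F G : Idx -> X -> M) (S : (X -> M) -> Prop) :
  (forall i, F i = G i) -> is_fun_basis P F S -> is_fun_basis P G S.
Proof.
move=> h [H1 H2 H3]; split.
- by move=> i Pi; rewrite -h; apply: H1.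
- move=> s c Hu HP H0; apply: H2 => // x; apply: etrans (H0 x).
  by apply: eq_bigr => i _; rewrite h.
- move=> D HD; have [s [c [HP Hx]]] := H3 D HD; exists s, c; split => // x.
  by rewrite Hx; apply: eq_bigr => i _; rewrite h.
Qed.

Theorem theorem2p7 (k : fieldType) (V E : finType) (src tgt : E -> V)
  (A : algType k) (I : pathalg src tgt k -> Prop)
  (pi : pathalg src tgt k -> A) (Qp : pred (qpath src tgt))
  (Drs : E -> qpath src tgt -> pathalg src tgt k -> A) :
  qconnected src tgt ->
  two_sided_ideal I ->
  (forall x, I x -> in_R2 x) ->
  is_quotient_map I pi ->
  is_path_basis pi Qp ->
  (* D_{r,s} : the differential operator with D(r) = s, D(E\{r} u V) = 0 *)
  (forall (r : E) (s : qpath src tgt), Qp s ->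
     src r = pt s -> tgt r = ph s ->
     [/\ is_diff pi (Drs r s),
         Drs r s << epath src tgt r >> = pi << s >>,
         (forall e, e != r -> Drs r s << epath src tgt e >> = 0) &
         (forall v, Drs r s << vpath src tgt v >> = 0)]) ->
  is_fun_basis
    (fun i : qpath src tgt + (E * qpath src tgt) =>
       match i with
       | inl s => Qp s && (pt s != ph s)
       | inr (r, s) => [&& Qp s, src r == pt s & tgt r == ph s]
       end)
    (fun i => match i with
       | inl s => Dinner pi (pi << s >>)
       | inr (r, s) => Drs r s
       end)
    (is_diff pi).
Proof.
move=> _ _ _ [HpiL HpiM Hpi1 _ _] [_ _ _ HBi HBs] HDh.
have HBind : forall (s : seq (qpath src tgt)) (c : qpath src tgt -> k),
    uniq s -> all Qp s ->
    \sum_(p <- s) c p *: pi (mon k p) = 0 -> forall p, p \in s -> c p = 0.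
  move=> s c Hu Ha H0; apply: (HBi s c Hu Ha); apply: (etrans _ H0).
  by apply: eq_bigr => p _; rewrite monE.
have HBspan : forall y : A, exists (s : seq (qpath src tgt)) (c : qpath src tgt -> k),
    all Qp s /\ y = \sum_(p <- s) c p *: pi (mon k p).
  move=> y; have [s [c [Ha Hy]]] := HBs y; exists s, c; split => //.
  by rewrite Hy; apply: eq_bigr => p _; rewrite monE.
have HD : forall r s, Qp s -> src r = pt s -> tgt r = ph s ->
    [/\ is_diff pi (Drs r s), Drs r s (mon k (epath src tgt r)) = pi (mon k s),
      (forall e, e != r -> Drs r s (mon k (epath src tgt e)) = 0) &
      (forall v, Drs r s (mon k (vpath src tgt v)) = 0)].
  move=> r s Hq h1 h2; have [a b c d] := HDh r s Hq h1 h2; split => //.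
  - by rewrite !monE; exact: b.
  - by move=> e he; rewrite monE; exact: c e he.
  - by move=> v; rewrite monE; exact: d v.
have H := main_basis HpiL HpiM Hpi1 HBind HBspan HD.
apply: (is_fun_basis_ext _ H) => [[s|[r s]]] /=; last by [].
by rewrite monE.
Qed.
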